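(* Let $N$ be a free abelian group of finite rank $n$ with a homomorphism $\psi:N\to\mathbb{Z}^2$ with finite cokernel, $K=\ker\psi$, $\langle a,b\rangle=\det(\psi(a),\psi(b))$. Let $\tilde{\mathbf{s}}=(e_i)_{1\le i\le n}$ be a cyclically ordered seed with underlying seed $\mathbf{s}$, and let $\mathscr{S}$ be the mutation equivalence class of $\mathbf{s}$. Then for all $\alpha,\beta\in K$, $(\alpha,\beta)_{\mathscr{S}}=-\chi_{\tilde{\mathbf{s}}}(\alpha,\beta)$.
   Context: A seed is an unordered basis $\{e_i\}$ of $N$ with each $\psi(e_i)$ nonzero primitive; seeds are mutation equivalent if related by finitely many mutations $\mu_j^\epsilon$ ($e_j\mapsto-e_j$, $e_i\mapsto e_i+[\epsilon\langle e_i,e_j\rangle]_+e_j$ for $i\ne j$, $[a]_+=\max(0,a)$, $\epsilon\in\{\pm\}$). A cyclic ordering of a seed is an ordering $(e_1,\dots,e_n)$ for which there are determinations $\theta_i$ of the arguments of $\psi(e_i)\in\mathbb{R}^2=\mathbb{C}$ with $\theta_1\le\theta_2\le\cdots\le\theta_n\le\theta_1+2\pi$. The bilinear form $\chi_{\tilde{\mathbf{s}}}$ on $N$ is defined by $\chi_{\tilde{\mathbf{s}}}(e_i,e_j)=1$ if $i=j$, $\langle e_i,e_j\rangle$ if $i>j$, $0$ if $i<j$. Intersection form: choose a smooth complete fan containing the rays $\mathbb{R}_{\ge0}\psi(e_i)$, with toric surface $\overline{Y}$, toric divisors $\overline{D}_\rho$, and $\overline{D}_i$ the divisor of the ray of $\psi(e_i)$;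 blow up distinct points $p_i\in\overline{D}_i$ that are smooth points of the toric boundary to get $\pi:Y\to\overline{Y}$ with exceptional curves $E_i$. For $a=\sum a_ie_i\in K$ set $\iota_\pi(a)=\pi^*C_a-\sum a_iE_i$, where $C_a\in NS(\overline{Y})$ is the unique class with $C_a\cdot\overline{D}_\rho=\sum_{i:\overline{D}_i=\overline{D}_\rho}a_i$ for each ray $\rho$. Then $(a,b)_{\mathscr{S}}:=\iota_\pi(a)\cdot\iota_\pi(b)$ (this depends only on $\mathscr{S}$). *)

(* Defs.v *)
From Stdlib Require Import Reals.
From mathcomp Require Import all_boot all_order all_algebra.
From mathcomp Require Import Rstruct.
Set Implicit Arguments. Unset Strict Implicit. Unset Printing Implicit Defensive.
Import Order.TTheory GRing.Theory Num.Theory.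

Local Open Scope ring_scope.

Definition det2 (p q : int * int) : int := p.1 * q.2 - p.2 * q.1.

Definition primitive2 (p : int * int) : Prop := gcdz p.1 p.2 = 1.

Definition has_arg (p : int * int) (t : R) : Prop :=
  exists r : R, (0 < r)%R /\ (p.1%:~R : R) = (r * cos t)%R /\ (p.2%:~R : R) = (r * sin t)%R.

(* The data: N = Z^n with basis e_0..e_{n-1} (the seed), and psi given by
   v i = psi(e_i).  An element a of N is its coordinate vector a : 'I_n -> int. *)
Definition psi_of n (v : 'I_n -> int * int) (a : 'I_n -> int) : int * int :=
  (\sum_(i < n) a i * (v i).1, \sum_(i < n) a i * (v i).2).

Definition in_K n (v : 'I_n -> int * int) (a : 'I_n -> int) : Prop :=
  psi_of v a = (0, 0).

(* psi : N -> Z^2 has finite cokernel: some positive d kills Z^2 / psi(N). *)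
Definition finite_coker n (v : 'I_n -> int * int) : Prop :=
  exists d : nat, (0 < d)%N /\
    forall w : int * int, exists a : 'I_n -> int,
      psi_of v a = ((d%:Z) * w.1, (d%:Z) * w.2).

Definition is_seed n (v : 'I_n -> int * int) : Prop :=
  forall i, primitive2 (v i).

Definition cyclic_ordering n (v : 'I_n -> int * int) : Prop :=
  exists theta : 'I_n -> R,
    (forall i, has_arg (v i) (theta i)) /\
    (forall i j : 'I_n, (i <= j)%N -> (theta i <= theta j)%R) /\
    (forall i j : 'I_n, (theta j <= theta i + 2 * PI)%R).

Definition chi_basis n (v : 'I_n -> int * int) (i j : 'I_n) : int :=
  if i == j then 1 else if (j < i)%N then det2 (v i) (v j) else 0.

Definition chi n (v : 'I_n -> int * int) (a b : 'I_n -> int) : int :=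
  \sum_(i < n) \sum_(j < n) a i * b j * chi_basis v i j.

(* A smooth complete fan in R^2 with rays spanned by u 0, ..., u (m-1), listed
   counterclockwise (strictly increasing arguments within one turn), each
   consecutive pair a Z-basis of Z^2 with positive orientation. *)
Definition smooth_complete_fan m (u : 'I_m -> int * int) : Prop :=
  (3 <= m)%N /\
  (forall k, primitive2 (u k)) /\
  (forall k : 'I_m, det2 (u k) (u (ordS k)) = 1) /\
  exists phi : 'I_m -> R,
    (forall k, has_arg (u k) (phi k)) /\
    (forall k l : 'I_m, (k < l)%N -> (phi k < phi l)%R) /\
    (forall k l : 'I_m, (phi l < phi k + 2 * PI)%R).

Definition fan_contains n (v : 'I_n -> int * int) m (u : 'I_m -> int * int) : Prop :=
  forall i, exists k, u k = v i.

(* Intersection numbers of toric divisors on the smooth complete toric surface: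
   D_k . D_l = 1 for adjacent rays, D_k^2 = -a_k where
   u_{k-1} + u_{k+1} = a_k u_k, i.e. a_k = det(u_{k-1}, u_{k+1}) (as det(u_k,u_{k+1}) = 1),
   and 0 otherwise. *)
Definition toric_int m (u : 'I_m -> int * int) (k l : 'I_m) : int :=
  if k == l then - det2 (u (ord_pred k)) (u (ordS k))
  else if (l == ordS k) || (l == ord_pred k) then 1 else 0.

(* Classes in NS(Ybar) = Pic(Ybar) are represented by c : 'I_m -> int, the class
   sum_k c_k D_k.  Intersection of two such classes: *)
Definition toric_pairing m (u : 'I_m -> int * int) (c c' : 'I_m -> int) : int :=
  \sum_(k < m) \sum_(l < m) c k * c' l * toric_int u k l.

Definition dot_divisor m (u : 'I_m -> int * int) (c : 'I_m -> int) (l : 'I_m) : int :=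
  \sum_(k < m) c k * toric_int u k l.

(* c represents C_a: C_a . D_rho = sum_{i : Dbar_i = Dbar_rho} a_i for every ray rho
   (Dbar_i = Dbar_rho iff psi(e_i) = u_rho, both being primitive). *)
Definition represents_Ca n (v : 'I_n -> int * int) m (u : 'I_m -> int * int)
    (a : 'I_n -> int) (c : 'I_m -> int) : Prop :=
  forall l : 'I_m, dot_divisor u c l = \sum_(i < n | v i == u l) a i.

(* iota_pi(a) . iota_pi(b) = (pi^* C_a - sum a_i E_i).(pi^* C_b - sum b_i E_i)
   = C_a . C_b - sum_i a_i b_i, since pi^* C . E_i = 0, E_i.E_j = -delta_ij. *)
Definition iota_pairing n (v : 'I_n -> int * int) m (u : 'I_m -> int * int)
    (a b : 'I_n -> int) (c c' : 'I_m -> int) : int :=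
  toric_pairing u c c' - \sum_(i < n) a i * b i.

(* Main.v *)
Require Import Defs.
From Stdlib Require Import Reals.
From mathcomp Require Import all_boot all_order all_algebra.
From mathcomp Require Import Rstruct.
From mathcomp Require Import ring lra zify.
Import Order.TTheory GRing.Theory Num.Theory.
Local Open Scope ring_scope.

Lemma ordS_neq m (l : 'I_m) : (3 <= m)%N -> ordS l != l.
Proof.
move=> hm; apply/eqP => /(congr1 val) /=. case: l => l hl /=.
have [e|hlt] := eqVneq l.+1 m. rewrite e modnn. lia.
rewrite modn_small; lia.
Qed.

Lemma ordSS_neq m (l : 'I_m) : (3 <= m)%N -> ordS (ordS l) != l.
Proof.
move=> hm; apply/eqP => /(congr1 val) /=. case: l => l hl /=.
have [e|hlt] := eqVneq l.+1 m. rewrite e modnn modn_small; lia.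
rewrite (modn_small (m:=l.+1)); last lia.
have [e|hlt2] := eqVneq l.+2 m. rewrite e modnn. lia.
rewrite modn_small; lia.
Qed.

Lemma ord_pred_neq m (l : 'I_m) : (3 <= m)%N -> ord_pred l != l.
Proof.
move=> hm; apply/eqP => h. have := @ordS_neq _ (ord_pred l) hm.
by rewrite ord_predK h eqxx.
Qed.

Lemma ordS_pred_neq m (l : 'I_m) : (3 <= m)%N -> ordS l != ord_pred l.
Proof.
move=> hm; apply/eqP => h. have := @ordSS_neq _ l hm.
by rewrite h ord_predK eqxx.
Qed.

Lemma eqS_pred m (k l : 'I_m) : (l == ordS k) = (k == ord_pred l).
Proof. by apply/eqP/eqP => ->; rewrite ?ordSK ?ord_predK. Qed.

Lemma eqpred_S m (k l : 'I_m) : (l == ord_pred k) = (k == ordS l).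
Proof. by apply/eqP/eqP => ->; rewrite ?ordSK ?ord_predK. Qed.

Lemma toric_sym m (u : 'I_m -> int * int) k l : toric_int u k l = toric_int u l k.
Proof.
rewrite /toric_int. have [->//|kl] := eqVneq k l.
idtac.
by rewrite (@eqS_pred _ k l) (@eqpred_S _ k l) orbC.
Qed.

Lemma dot_formula m (u : 'I_m -> int * int) c l : (3 <= m)%N ->
  dot_divisor u c l = c (ord_pred l) + c (ordS l)
     - det2 (u (ord_pred l)) (u (ordS l)) * c l.
Proof.
move=> hm.
rewrite /dot_divisor (bigD1 l) //= (bigD1 (ord_pred l)) /=; last by rewrite ord_pred_neq.
rewrite (bigD1 (ordS l)) /=; last by rewrite ordS_neq // ordS_pred_neq.
rewrite big1 ?addr0; last first.
  move=> k /andP [/andP [kl kp] ks].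
  rewrite /toric_int (negbTE kl) (@eqS_pred _ k l) (@eqpred_S _ k l) (negbTE kp) (negbTE ks) /=.
  by rewrite mulr0.
rewrite /toric_int eqxx (negbTE (@ord_pred_neq _ l hm)) (negbTE (@ordS_neq _ l hm)).
rewrite ord_predK eqxx /= ordSK eqxx orbT.
ring.
Qed.

Lemma PI_gt0 : (0 < PI :> R).
Proof. by apply/RltP; exact: PI_RGT_0. Qed.

Lemma int_lt (a b : int) : (a%:~R < b%:~R :> R) -> (a < b).
Proof. by rewrite ltr_int. Qed.
Arguments int_lt {a b}.

Lemma int_step (z z' : int) (x x' y y' : R) :
  x = y + 2 * PI * z%:~R -> x' = y' + 2 * PI * z'%:~R -> x <= x' -> x' <= x + 2 * PI ->
  ((y < y') -> (y' < y + 2 * PI) -> z' = z) /\ ((y' < y) -> (y < y' + 2 * PI) -> z' = z + 1).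
Proof.
move=> hx hx' h1 h2; have P := PI_gt0.
split => h3 h4.
- have a1 : (z'%:~R < (z + 1)%:~R :> R) by rewrite intrD; nra.
  have a2 : (z%:~R < (z' + 1)%:~R :> R) by rewrite intrD; nra.
  move: (int_lt a1) (int_lt a2); lia.
- have a1 : (z%:~R < z'%:~R :> R) by nra.
  have a2 : (z'%:~R < (z + 2)%:~R :> R) by rewrite intrD; nra.
  move: (int_lt a1) (int_lt a2); lia.
Qed.


Lemma IZR_int (k : Z) : exists z : int, IZR k = z%:~R.
Proof.
case: k => [|p|p].
- by exists 0.
- exists (Posz (nat_of_pos p)). by rewrite IZRposE INRE.
- exists (- Posz (nat_of_pos p)). by rewrite IZR_NEG IZRposE INRE RoppE mulrNz.
Qed.

Lemma sc1 (x : R) : cos x * cos x + sin x * sin x = 1.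
Proof. have := sin2_cos2 x. rewrite /Rsqr RplusE !RmultE R1E. lra. Qed.

Lemma arg_unique p t t' : has_arg p t -> has_arg p t' ->
  exists z : int, t' = t + 2 * PI * z%:~R.
Proof.
move=> [r [hr [h1 h2]]] [r' [hr' [h1' h2']]].
have c1 := sc1 t; have c2 := sc1 t'.
have e : r * r = r' * r'.
  have -> : r * r = (r * cos t) ^+ 2 + (r * sin t) ^+ 2.
    rewrite -[r * r]mulr1 -c1; ring.
  have -> : r' * r' = (r' * cos t') ^+ 2 + (r' * sin t') ^+ 2.
    rewrite -[r' * r']mulr1 -c2; ring.
  by rewrite -h1 -h2 h1' h2'.
have err : r = r' by nra.
subst r'.
have hc : cos t = cos t'.
  apply: (mulfI (x:=r)); first by rewrite gt_eqF.
  by rewrite -h1 -h1'.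
have hs : sin t = sin t'.
  apply: (mulfI (x:=r)); first by rewrite gt_eqF.
  by rewrite -h2 -h2'.
have ha : (t' - t) / 2 + (t' - t) / 2 = t' - t :> R by field.
have hcos : cos (t' - t) = 1.
  have := cos_minus t' t. rewrite !RplusE !RmultE RminusE -hc -hs sc1. done.
have hcos2 := eq_trans (f_equal cos ha) hcos.
clear hcos; move: hcos2 ha; move: ((t' - t) / 2) => a hcos ha.
have hsa : sin a = 0.
  move: hcos; rewrite cos_plus RminusE !RmultE => hcos.
  have := sc1 a. move=> h. have : sin a * sin a = 0 by lra.
  by move/eqP; rewrite mulf_eq0 orbb => /eqP.
have [k hk] := sin_eq_0_0 _ hsa.
have [z hz] := IZR_int k.
exists z. move: hk; rewrite hz RmultE => hk.
have : t' - t = 2 * (z%:~R * PI) by rewrite -ha hk; ring.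
move=> h; lra.
Qed.

Definition b2i (b : bool) : int := if b then 1 else 0.

Lemma det_self x : det2 x x = 0.
Proof. by rewrite /det2 mulrC subrr. Qed.

Lemma sum_ltS m (F : 'I_m -> int) (k : 'I_m) :
  \sum_(j < m | (j < k.+1)%N) F j = \sum_(j < m | (j < k)%N) F j + F k.
Proof.
rewrite (bigD1 k) //= addrC; congr (_ + _).
apply: eq_bigl => j; by rewrite ltnS ltn_neqAle andbC -val_eqE.
Qed.

Definition cnt m (u : 'I_m -> int * int) (A : 'I_m -> int) (k : 'I_m) : int :=
  \sum_(j < m | (j < k)%N) A j * det2 (u j) (u k).
Arguments cnt {m}.

Lemma cnt_gen m (u : 'I_m -> int * int) (A : 'I_m -> int) (p : 'I_m) w :
  (forall w, \sum_(j < m) A j * det2 (u j) w = 0) ->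
  \sum_(j < m | (j < ordS p)%N) A j * det2 (u j) w = \sum_(j < m | (j < p.+1)%N) A j * det2 (u j) w.
Proof.
move=> hz.
case: (ltnP p.+1 m) => h.
  by apply: eq_bigl => j; rewrite /= modn_small.
have e : p.+1 = m by have := ltn_ord p; lia.
rewrite (eq_bigl (fun _ => false)); last first.
  by move=> j /=; rewrite e modnn ltn0.
rewrite big_pred0_eq (eq_bigl (fun _ => true)) ?hz //.
by move=> j; rewrite e ltn_ord.
Qed.

Lemma cnt_S m (u : 'I_m -> int * int) (A : 'I_m -> int) (k : 'I_m) :
  (forall w, \sum_(j < m) A j * det2 (u j) w = 0) ->
  cnt u A (ordS k) = \sum_(j < m | (j < k.+1)%N) A j * det2 (u j) (u (ordS k)).
Proof. by move=> hz; rewrite /cnt cnt_gen. Qed.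

Lemma cnt_P m (u : 'I_m -> int * int) (A : 'I_m -> int) (k : 'I_m) :
  (forall w, \sum_(j < m) A j * det2 (u j) w = 0) ->
  cnt u A (ord_pred k) = \sum_(j < m | (j < k)%N) A j * det2 (u j) (u (ord_pred k)).
Proof.
move=> hz. rewrite -{2}(ord_predK k) cnt_gen // sum_ltS det_self mulr0 addr0.
by [].
Qed.

Lemma plucker (w x y z : int * int) :
  det2 x y = 1 -> det2 y z = 1 -> det2 w x + det2 w z - det2 x z * det2 w y = 0.
Proof.
move=> h1 h2.
have key : det2 x y * det2 w z + det2 y z * det2 w x + det2 z x * det2 w y = 0.
  by rewrite /det2; ring.
rewrite h1 h2 in key. have -> : det2 x z = - det2 z x by rewrite /det2; ring.
by rewrite -key; ring.
Qed.

Lemma cnt_rep m (u : 'I_m -> int * int) (A : 'I_m -> int) (l : 'I_m) :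
  (3 <= m)%N -> (forall k, det2 (u k) (u (ordS k)) = 1) ->
  (forall w, \sum_(j < m) A j * det2 (u j) w = 0) ->
  dot_divisor u (cnt u A) l = A l.
Proof.
move=> hm hdet hz.
rewrite dot_formula // cnt_P // cnt_S // sum_ltS hdet mulr1.
have hp : det2 (u (ord_pred l)) (u l) = 1.
  by have := hdet (ord_pred l); rewrite ord_predK.
have H : \sum_(j < m | (j < l)%N) A j * det2 (u j) (u (ord_pred l))
   + \sum_(j < m | (j < l)%N) A j * det2 (u j) (u (ordS l))
   - det2 (u (ord_pred l)) (u (ordS l)) * cnt u A l = 0.
  rewrite /cnt mulr_sumr -big_split -sumrB /=.
  apply: big1 => j _.
  have := @plucker (u j) _ _ _ hp (hdet l). move=> P.
  by rewrite -[RHS](mulr0 (A j)) -P; ring.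
move: H.
set S1 := \sum_(j < m | _) _. set S2 := \sum_(j < m | _) _. set X := _ * cnt u A l.
lia.
Qed.

Lemma regroup n m (r : 'I_n -> 'I_m) (X : 'I_n -> int) (Y : 'I_m -> int) :
  \sum_(j < m) (\sum_(i < n | r i == j) X i) * Y j = \sum_(i < n) X i * Y (r i).
Proof.
rewrite (eq_bigr (fun j => \sum_(i < n) (if r i == j then X i * Y j else 0))); last first.
  by move=> j _; rewrite mulr_suml big_mkcond.
rewrite exchange_big; apply: eq_bigr => i _.
rewrite -big_mkcond /= (eq_bigl (fun j => j == r i)) ?big_pred1_eq //.
Qed.

Lemma tp1 m (u : 'I_m -> int * int) c c' :
  toric_pairing u c c' = \sum_(l < m) c' l * dot_divisor u c l.
Proof.
rewrite /toric_pairing exchange_big; apply: eq_bigr => l _.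
rewrite /dot_divisor mulr_sumr; apply: eq_bigr => k _; ring.
Qed.

Lemma tp2 m (u : 'I_m -> int * int) c c' :
  toric_pairing u c c' = \sum_(k < m) c k * dot_divisor u c' k.
Proof.
rewrite /toric_pairing; apply: eq_bigr => k _.
rewrite /dot_divisor mulr_sumr; apply: eq_bigr => l _; rewrite toric_sym; ring.
Qed.

Lemma detsum_l n (v : 'I_n -> int * int) (a : 'I_n -> int) w :
  \sum_(i < n) a i * det2 (v i) w = det2 (psi_of v a) w.
Proof.
rewrite /det2 /psi_of /= !mulr_suml -sumrB; apply: eq_bigr => i _; ring.
Qed.

Lemma detsum_r n (v : 'I_n -> int * int) (a : 'I_n -> int) w :
  \sum_(i < n) a i * det2 w (v i) = det2 w (psi_of v a).
Proof.
rewrite /det2 /psi_of /= !mulr_sumr -sumrB; apply: eq_bigr => i _; ring.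
Qed.

Lemma u_inj m (u : 'I_m -> int * int) : smooth_complete_fan u -> injective u.
Proof.
move=> [_ [_ [_ [phi [hphi [mono wrap]]]]]].
have P := PI_gt0.
suff H : forall k l : 'I_m, (k < l)%N -> u k = u l -> False.
  move=> k l e; apply/eqP; case: (ltngtP k l) => [h|h|h].
  - by case: (H _ _ h e).
  - by case: (H _ _ h (esym e)).
  - exact/eqP/val_inj.
move=> k l h e.
have h1 := hphi l; rewrite -e in h1.
have [z hz] := @arg_unique _ _ _ (hphi k) h1.
have a1 := mono _ _ h. have a2 := wrap k l.

have b1 : (0 < z%:~R :> R) by nra.
have b2 : (z%:~R < 1 :> R) by nra.
move: b1 b2; rewrite ltr0z ltrz1; lia.
Qed.

Theorem lemma2p4 (n : nat) (v : 'I_n -> int * int)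
    (Hseed : is_seed v) (Hcoker : finite_coker v) (Hcyc : cyclic_ordering v)
    (m : nat) (u : 'I_m -> int * int)
    (Hfan : smooth_complete_fan u) (Hcont : fan_contains v u)
    (alpha beta : 'I_n -> int) (Ha : in_K v alpha) (Hb : in_K v beta) :
  (exists c, represents_Ca v u alpha c) /\
  (exists c', represents_Ca v u beta c') /\
  (forall c c', represents_Ca v u alpha c -> represents_Ca v u beta c' ->
     iota_pairing v u alpha beta c c' = - chi v alpha beta).
Proof.
have uinj := @u_inj _ _ Hfan.
move: Hfan => [hm [_ [hdet [phi [hphi [pmono pwrap]]]]]].
have [r hr] := fin_all_exists Hcont.
have hrv : forall i k, (v i == u k) = (r i == k).
  by move=> i k; rewrite -hr (inj_eq uinj).
move: Hcyc => [theta [htheta [tmono twrap]]].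
have Hq : forall i, exists z : int, theta i = phi (r i) + 2 * PI * z%:~R.
  move=> i; have h := hphi (r i); rewrite hr in h.
  exact: @arg_unique _ _ _ h (htheta i).
have [q hq] := fin_all_exists Hq.
pose A (a : 'I_n -> int) l := \sum_(i < n | v i == u l) a i.
have hA : forall a l, A a l = \sum_(i < n | r i == l) a i.
  by move=> a l; apply: eq_bigl => i; rewrite hrv.
have hz : forall a, in_K v a -> forall w, \sum_(j < m) A a j * det2 (u j) w = 0.
  move=> a Hk w.
  under eq_bigr do rewrite hA.
  rewrite regroup.
  under eq_bigr do rewrite hr.
  by rewrite detsum_l Hk /det2 /= !mul0r subrr.
have rep : forall a, in_K v a -> represents_Ca v u a (cnt u (A a)).
  move=> a Hk l; exact: cnt_rep hm hdet (hz a Hk).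
split; first by exists (cnt u (A alpha)); exact: rep.
split; first by exists (cnt u (A beta)); exact: rep.
move=> c c' hc hc'.
have T : toric_pairing u c c' = \sum_(k < m) cnt u (A alpha) k * A beta k.
  rewrite tp1 (eq_bigr (fun l => c' l * A alpha l)); last by move=> l _; rewrite hc.
  rewrite -(eq_bigr _ (fun l _ => congr1 (fun x => c' l * x) (rep alpha Ha l))).
  by rewrite -tp1 tp2; apply: eq_bigr => k _; rewrite hc'.
have T2 : \sum_(k < m) cnt u (A alpha) k * A beta k
    = \sum_(i' < n) beta i' * \sum_(i < n) alpha i * (b2i (r i < r i')%N * det2 (v i) (v i')).
  under eq_bigr do rewrite mulrC hA.
  rewrite regroup; apply: eq_bigr => i' _; congr (_ * _).
  have -> : cnt u (A alpha) (r i') = \sum_(j < m) A alpha j * (b2i (j < r i')%N * det2 (u j) (u (r i'))).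
    rewrite /cnt big_mkcond; apply: eq_bigr => j _; rewrite /b2i; case: ifP => _ /=; ring.
  under eq_bigr do rewrite hA.
  rewrite regroup; apply: eq_bigr => i _; by rewrite !hr.
have Z : \sum_(i < n) \sum_(i' < n) alpha i * beta i' * ((1 + q i - q i') * det2 (v i) (v i')) = 0.
  rewrite (eq_bigr (fun i => alpha i * (1 + q i) * \sum_(i' < n) beta i' * det2 (v i) (v i')
      - \sum_(i' < n) (beta i' * q i') * (alpha i * det2 (v i) (v i')))); last first.
    move=> i _; rewrite mulr_sumr -sumrB; apply: eq_bigr => i' _; ring.
  rewrite sumrB big1; last by move=> i _; rewrite detsum_r Hb /det2 /=; ring.
  rewrite exchange_big /= big1 ?subrr //.
  by move=> i' _; rewrite -mulr_sumr detsum_l Ha /det2 /= !mul0r subrr mulr0.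
have Pw : forall i i', b2i (r i < r i')%N * det2 (v i) (v i') + chi_basis v i i'
     = (i == i')%:R + (1 + q i - q i') * det2 (v i) (v i').
  move=> i i'. rewrite /chi_basis.
  case: (eqVneq i i') => [<-|nii].
    by rewrite ltnn /b2i det_self /= mul0r mulr0 add0r addr0.
  have -> : (false%:R : int) = 0 by [].
  rewrite add0r.
  case: (eqVneq (r i) (r i')) => [er|nr].
    have ev : v i = v i' by rewrite -!hr er.
    by rewrite ev det_self; case: ifP => _; ring.
  have W : b2i (r i < r i')%N + b2i (i' < i)%N = 1 + q i - q i'.
    case: (ltngtP i i') => hii.
    - have [S1 S2] := @int_step _ _ _ _ _ _ (hq i) (hq i') (tmono _ _ (ltnW hii)) (twrap i i').
      case: (ltngtP (r i) (r i')) => hr2.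
      + have e := S1 (pmono _ _ hr2) (pwrap (r i) (r i')).
        rewrite /b2i /=; lia.
      + have e := S2 (pmono _ _ hr2) (pwrap (r i') (r i)).
        rewrite /b2i /=; lia.
      + by move: nr; rewrite (val_inj hr2) eqxx.
    - have [S1 S2] := @int_step _ _ _ _ _ _ (hq i') (hq i) (tmono _ _ (ltnW hii)) (twrap i' i).
      case: (ltngtP (r i) (r i')) => hr2.
      + have e := S2 (pmono _ _ hr2) (pwrap (r i) (r i')).
        rewrite /b2i /=; lia.
      + have e := S1 (pmono _ _ hr2) (pwrap (r i') (r i)).
        rewrite /b2i /=; lia.
      + by move: nr; rewrite (val_inj hr2) eqxx.
    - by move: nii; rewrite (val_inj hii) eqxx.
  rewrite -W /b2i; case: ifP => _; case: ifP => _; ring.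
have K : \sum_(i' < n) beta i' * \sum_(i < n) alpha i * (b2i (r i < r i')%N * det2 (v i) (v i'))
    + \sum_(i < n) \sum_(i' < n) alpha i * beta i' * chi_basis v i i' = \sum_(i < n) alpha i * beta i.
  rewrite (eq_bigr (fun i' => \sum_(i < n) beta i' * (alpha i * (b2i (r i < r i')%N * det2 (v i) (v i'))))); last by move=> i' _; rewrite mulr_sumr.
  rewrite exchange_big /= -big_split /=.
  rewrite (eq_bigr (fun i => \sum_(i' < n) alpha i * beta i' * (i == i')%:R
       + \sum_(i' < n) alpha i * beta i' * ((1 + q i - q i') * det2 (v i) (v i')))); last first.
    move=> i _; rewrite -!big_split /=; apply: eq_bigr => i' _.
    by rewrite -mulrDr -Pw; ring.
  rewrite big_split /= Z addr0; apply: eq_bigr => i _.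
  rewrite (bigD1 i) //= eqxx mulr1 big1 ?addr0 //.
  by move=> i' ne; rewrite eq_sym (negbTE ne) mulr0.
rewrite /iota_pairing T T2 /chi -K; ring.
Qed.
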